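(* Let $d\ge1$ and let $x_1,\dots,x_d,y_1,\dots,y_{d+1}$ be real numbers such that the $(d+1)\times(d+1)$ matrix whose $k$-th column $\mathbf{v}_k$ ($1\le k\le d$) has entry $x_k$ in row $k$, entry $y_k$ in row $d+1$ and zeros elsewhere, and whose last column is $\mathbf{v}_{d+1}=(0,\dots,0,y_{d+1})^T$, is nonsingular. Put $K_0=1$ and $K_j=1+\sum_{i=1}^j(y_i/x_i)^2$ for $1\le j\le d$. Let $\mathbf{v}_1^\star,\dots,\mathbf{v}_{d+1}^\star$ be the Gram–Schmidt orthogonalization of $(\mathbf{v}_1,\dots,\mathbf{v}_{d+1})$. Then for $1\le k\le d$ and $1\le i\le d+1$, $$(\mathbf{v}_k^\star)_i=\begin{cases}-\dfrac{y_k}{K_{k-1}}\cdot\dfrac{y_i}{x_i} & i<k,\\ x_k & i=k,\\ 0 & k<i<d+1,\\ \dfrac{y_k}{K_{k-1}} & i=d+1,\end{cases}$$ and $(\mathbf{v}_{d+1}^\star)_i=-\dfrac{y_{d+1}}{K_d}\cdot\dfrac{y_i}{x_i}$ for $i\le d$, $(\mathbf{v}_{d+1}^\star)_{d+1}=\dfrac{y_{d+1}}{K_d}$. Moreover $$\|\mathbf{v}_k^\star\|_2^2=x_k^2\frac{K_k}{K_{k-1}}\ (1\le k\le d),\qquad \|\mathbf{v}_{d+1}^\star\|_2^2=\frac{y_{d+1}^2}{K_d},$$ and the Gram–Schmidt coefficients are $$\mu_{k,j}=\frac{\mathbf{v}_k\cdot\mathbf{v}_j^\star}{\mathbf{v}_j^\star\cdot\mathbf{v}_j^\star}=\frac{y_ky_j}{x_j^2K_j},\qquad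 1\le j<k\le d+1.$$
   Context: $(\mathbf{v})_i$ denotes the $i$-th coordinate, $\|\cdot\|_2$ the Euclidean norm. Gram–Schmidt orthogonalization: $\mathbf{v}_k^\star=\mathbf{v}_k-\sum_{j<k}\mu_{k,j}\mathbf{v}_j^\star$ with $\mu_{k,j}=\frac{\mathbf{v}_k\cdot\mathbf{v}_j^\star}{\mathbf{v}_j^\star\cdot\mathbf{v}_j^\star}$. *)

(* Defs.v *)
From mathcomp Require Import all_boot all_order all_algebra.
Set Implicit Arguments. Unset Strict Implicit. Unset Printing Implicit Defensive.
Import Order.TTheory GRing.Theory Num.Theory.
Local Open Scope ring_scope.

Definition dot (R : pzRingType) (n : nat) (u w : 'cV[R]_n) : R :=
  \sum_(i < n) u i 0 * w i 0.

(* Gram-Schmidt orthogonalization of a (0-indexed) family v 0, v 1, ...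
   gs_seq v k = [:: v*_0; ...; v*_(k-1)] with
   v*_k = v_k - \sum_(j<k) mu_(k,j) v*_j,  mu_(k,j) = (v_k . v*_j)/(v*_j . v*_j). *)
Fixpoint gs_seq (R : fieldType) (n : nat) (v : nat -> 'cV[R]_n) (k : nat)
  : seq 'cV[R]_n :=
  match k with
  | 0 => [::]
  | k'.+1 =>
      let s := gs_seq v k' in
      rcons s (v k' - \sum_(j < k')
                 ((dot (v k') (nth 0 s j) / dot (nth 0 s j) (nth 0 s j))
                    *: nth 0 s j))
  end.

Definition gs (R : fieldType) (n : nat) (v : nat -> 'cV[R]_n) (k : nat) : 'cV[R]_n :=
  nth 0 (gs_seq v k.+1) k.

Definition gs_mu (R : fieldType) (n : nat) (v : nat -> 'cV[R]_n) (k j : nat) : R :=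
  dot (v k) (gs v j) / dot (gs v j) (gs v j).

(* The (d+1)x(d+1) matrix of the statement (0-indexed: column k < d has x k in
   row k and y k in row d; column d has y d in row d). *)
Definition Bmat (R : pzRingType) (d : nat) (x y : nat -> R) : 'M[R]_d.+1 :=
  \matrix_(i < d.+1, k < d.+1)
    if (k < d)%N then
      (if i == k then x k else if i == d :> nat then y k else 0)
    else (if i == d :> nat then y d else 0).

Definition Bcol (R : pzRingType) (d : nat) (x y : nat -> R) (k : nat) : 'cV[R]_d.+1 :=
  col (inord k) (Bmat d x y).

(* K j = 1 + \sum_(i<j) (y_i/x_i)^2 (0-indexed, so this is the paper's K_j;
   K 0 = 1). *)
Definition Kc (R : fieldType) (x y : nat -> R) (j : nat) : R :=
  1 + \sum_(i < j) (y i / x i) ^+ 2.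

(* Main.v *)
Require Import Defs.
From mathcomp Require Import all_boot all_order all_algebra.
From mathcomp Require Import zify ring lra.
Set Implicit Arguments. Unset Strict Implicit. Unset Printing Implicit Defensive.
Import Order.TTheory GRing.Theory Num.Theory.
Local Open Scope ring_scope.

Definition vf (R : pzRingType) d (x y : nat -> R) (k i : nat) : R :=
  if (k < d)%N then (if i == k then x k else if i == d then y k else 0)
  else (if i == d then y d else 0).

Lemma BcolE (R : pzRingType) d (x y : nat -> R) k (i : 'I_d.+1) :
  (k <= d)%N -> Bcol d x y k i 0 = vf d x y k i.
Proof.
move=> hk; rewrite /Bcol !mxE.
have e : nat_of_ord (@inord d k) = k by rewrite inordK.
by rewrite /vf -[i == inord k]/(nat_of_ord i == nat_of_ord (inord k)) e.
Qed.

Lemma Kc_S (R : fieldType) (x y : nat -> R) j : Kc x y j.+1 = Kc x y j + (y j / x j)^+2.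
Proof. by rewrite /Kc big_ord_recr /= addrA. Qed.

Lemma Kc_gt0 (R : realFieldType) (x y : nat -> R) j : 0 < Kc x y j.
Proof.
rewrite /Kc; apply: (lt_le_trans ltr01); rewrite lerDl.
by apply: sumr_ge0 => i _; exact: sqr_ge0.
Qed.

Lemma Kc0 (R : fieldType) (x y : nat -> R) : Kc x y 0 = 1.
Proof. by rewrite /Kc big_ord0 addr0. Qed.

Lemma sumKc (R : fieldType) (x y : nat -> R) j :
  \sum_(0 <= i < j) (y i / x i)^+2 = Kc x y j - 1.
Proof. by rewrite /Kc big_mkord [1 + _]addrC addrK. Qed.

Definition Gf (R : fieldType) d (x y : nat -> R) (k i : nat) : R :=
  if (i < k)%N then - (y k / Kc x y k) * (y i / x i)
  else if i == k then (if (k < d)%N then x k else y k / Kc x y k)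
  else if (i < d)%N then 0 else y k / Kc x y k.

Lemma dot_nat (R : pzRingType) n (u w : 'cV[R]_n) f g :
  (forall i : 'I_n, u i 0 = f (val i)) -> (forall i : 'I_n, w i 0 = g (val i)) ->
  dot u w = \sum_(0 <= i < n) f i * g i.
Proof. by move=> hu hw; rewrite /dot big_mkord; apply: eq_bigr => i _; rewrite hu hw. Qed.

Section GfL.
Lemma GfL (R : fieldType) d (x y : nat -> R) k i : (i < k)%N ->
  Gf d x y k i = - (y k / Kc x y k) * (y i / x i).
Proof. by rewrite /Gf => ->. Qed.
Lemma Gfkk (R : fieldType) d (x y : nat -> R) k : (k < d)%N -> Gf d x y k k = x k.
Proof. by rewrite /Gf ltnn eqxx => ->. Qed.
Lemma Gfdd (R : fieldType) d (x y : nat -> R) : Gf d x y d d = y d / Kc x y d.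
Proof. by rewrite /Gf ltnn eqxx. Qed.
Lemma Gf0 (R : fieldType) d (x y : nat -> R) k i : (k < i)%N -> (i < d)%N -> Gf d x y k i = 0.
Proof. by move=> h1 h2; rewrite /Gf ltnNge (ltnW h1) gtn_eqF // h2. Qed.
Lemma Gfd (R : fieldType) d (x y : nat -> R) k : (k < d)%N -> Gf d x y k d = y k / Kc x y k.
Proof. by move=> h; rewrite /Gf ltnNge (ltnW h) gtn_eqF // ltnn. Qed.
End GfL.

Lemma normG (R : realFieldType) d (x y : nat -> R) j
  (hx : forall i, (i < d)%N -> x i != 0) : (j <= d)%N ->
  \sum_(0 <= i < d.+1) Gf d x y j i * Gf d x y j i =
  (if (j < d)%N then x j ^+2 + y j ^+2 / Kc x y j else y d ^+2 / Kc x y d).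
Proof.
move=> hj; rewrite big_nat_recr //= (big_cat_nat (leq0n j) hj) /=.
have e1 : \sum_(0 <= i < j) Gf d x y j i * Gf d x y j i
          = (y j / Kc x y j)^+2 * (Kc x y j - 1).
  rewrite -sumKc mulr_sumr; apply: eq_big_nat => i /andP[_ hi].
  rewrite /Gf hi; ring.
rewrite e1.
have K0 : Kc x y j != 0 by rewrite gt_eqF // Kc_gt0.
case: (ltnP j d) => hjd.
  rewrite big_ltn // big_nat_cond big1 => [|i /andP[/andP[hi1 hi2] _]]; last first.
    by rewrite Gf0 // mulr0.
  by rewrite Gfkk // Gfd //; field.
have -> : j = d by apply/eqP; rewrite eqn_leq hj hjd.
rewrite big_nat_cond big_pred0 ?Gfdd; last by move=> i; case: (leqP d i) => //=; lia.
have K1 : Kc x y d != 0 by rewrite gt_eqF // Kc_gt0.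
by field.
Qed.

Lemma vf0 (R : pzRingType) d (x y : nat -> R) k i :
  (i < d)%N -> i != k -> vf d x y k i = 0.
Proof. by move=> h1 h2; rewrite /vf (negbTE h2) ltn_eqF //; case: ifP. Qed.
Lemma vfkk (R : pzRingType) d (x y : nat -> R) k : (k < d)%N -> vf d x y k k = x k.
Proof. by move=> h; rewrite /vf h eqxx. Qed.
Lemma vfd (R : pzRingType) d (x y : nat -> R) k : (k <= d)%N -> vf d x y k d = y k.
Proof.
move=> h; rewrite /vf eqxx; case: ifP => h2; first by rewrite gtn_eqF.
by have -> : k = d by apply/eqP; rewrite eqn_leq h leqNgt h2.
Qed.

Lemma dotvG (R : fieldType) d (x y : nat -> R) j k : (j < k)%N -> (k <= d)%N ->
  \sum_(0 <= i < d.+1) vf d x y k i * Gf d x y j i = y k * (y j / Kc x y j).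
Proof.
move=> hjk hkd; rewrite big_nat_recr //= big_nat_cond big1 ?add0r; last first.
  move=> i /andP[/andP[_ hi] _]; case: (leqP i j) => hij.
    by rewrite vf0 ?mul0r //; apply/eqP; lia.
  by rewrite Gf0 ?mulr0.
by rewrite vfd // Gfd //; lia.
Qed.

Lemma tele (R : realFieldType) d (x y : nat -> R)
  (hx : forall i, (i < d)%N -> x i != 0) (yk : R) m n : (m <= n)%N -> (n <= d)%N ->
  \sum_(m <= j < n) yk * y j / (x j ^+ 2 * Kc x y j.+1) * (y j / Kc x y j)
  = yk * ((Kc x y m)^-1 - (Kc x y n)^-1).
Proof.
move=> hmn hnd.
rewrite (eq_big_nat _ _ (F2 := fun j => yk * (- (Kc x y j.+1)^-1 - - (Kc x y j)^-1))); last first.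
  move=> j /andP[_ hj]; have hxj : x j != 0 by apply: hx; lia.
  have K0 : Kc x y j != 0 by rewrite gt_eqF // Kc_gt0.
  have K1 : Kc x y j + (y j / x j) ^+ 2 != 0 by rewrite -Kc_S gt_eqF // Kc_gt0.
  have K2 : Kc x y j * x j ^+ 2 + y j ^+ 2 != 0.
    have -> : Kc x y j * x j ^+ 2 + y j ^+ 2 = x j ^+ 2 * (Kc x y j + (y j / x j) ^+ 2) by field.
    by rewrite mulf_neq0 // expf_neq0.
  by rewrite Kc_S; field; rewrite K0 hxj K2.
rewrite -big_distrr /= telescope_sumr //; ring.
Qed.

Lemma gs_seq_size (R : fieldType) n (v : nat -> 'cV[R]_n) k : size (gs_seq v k) = k.
Proof. by elim: k => //= k IH; rewrite size_rcons IH. Qed.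

Lemma nth_gs_seq (R : fieldType) n (v : nat -> 'cV[R]_n) k j :
  (j < k)%N -> nth 0 (gs_seq v k) j = gs v j.
Proof.
elim: k => // k IH; rewrite ltnS leq_eqVlt => /orP[/eqP->|hj].
  by [].
by rewrite /= nth_rcons gs_seq_size hj IH.
Qed.

Lemma gsE (R : fieldType) n (v : nat -> 'cV[R]_n) k :
  gs v k = v k - \sum_(j < k) gs_mu v k j *: gs v j.
Proof.
rewrite /gs /= nth_rcons gs_seq_size ltnn eqxx.
by congr (_ - _); apply: eq_bigr => j _; rewrite nth_gs_seq.
Qed.

Lemma gsG (R : realFieldType) d (x y : nat -> R)
  (hx : forall i, (i < d)%N -> x i != 0) k :
  (k <= d)%N -> forall i : 'I_d.+1, gs (Bcol d x y) k i 0 = Gf d x y k i.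
Proof.
elim/ltn_ind: k => k IH hk.
have mu : forall j, (j < k)%N ->
    gs_mu (Bcol d x y) k j = y k * y j / (x j ^+ 2 * Kc x y j.+1).
  move=> j hjk; have hjd : (j < d)%N by lia.
  rewrite /gs_mu (@dot_nat _ _ _ _ (vf d x y k) (Gf d x y j)); last first.
  - by move=> i; apply: IH => //; lia.
  - by move=> i; apply: BcolE.
  rewrite (@dot_nat _ _ _ _ (Gf d x y j) (Gf d x y j)); last first.
  - by move=> i; apply: IH => //; lia.
  - by move=> i; apply: IH => //; lia.
  rewrite dotvG // (normG _ hx) ?hjd; last by lia.
  have hxj := hx j hjd.
  have K0 : Kc x y j != 0 by rewrite gt_eqF // Kc_gt0.
  have K1 : Kc x y j + (y j / x j) ^+ 2 != 0 by rewrite -Kc_S gt_eqF // Kc_gt0.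
  have K2 : Kc x y j * x j ^+ 2 + y j ^+ 2 != 0.
    have -> : Kc x y j * x j ^+ 2 + y j ^+ 2 = x j ^+ 2 * (Kc x y j + (y j / x j) ^+ 2) by field.
    by rewrite mulf_neq0 // expf_neq0.
  by rewrite Kc_S; field; rewrite ?K0 ?hxj ?K1 ?K2.
move=> i; have hv := BcolE x y i hk; rewrite gsE; set B := Bcol d x y k in hv *; clearbody B; rewrite !mxE summxE hv.
rewrite (eq_bigr (fun j : 'I_k => y k * y j / (x j ^+ 2 * Kc x y j.+1) * Gf d x y j i)); last first.
  move=> j _; have hj := ltn_ord j; rewrite !mxE mu // IH //; lia.
rewrite -(big_mkord xpredT (fun j => y k * y j / (x j ^+ 2 * Kc x y j.+1) * Gf d x y j i)).
move: (ltn_ord i); set n := nat_of_ord i => hn.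
clearbody n.
have Kk : Kc x y k != 0 by rewrite gt_eqF // Kc_gt0.
case: (ltnP n d) => hnd; last first.
  have -> : n = d by lia.
  rewrite vfd //.
  rewrite (eq_big_nat _ _ (F2 := fun j => y k * y j / (x j ^+ 2 * Kc x y j.+1) * (y j / Kc x y j))); last first.
    by move=> j /andP[_ hj]; rewrite Gfd //; lia.
  rewrite (tele _ hx) //= Kc0 invr1.
  case: (ltnP k d) => hkd'; first by rewrite Gfd //; field.
  have ek : k = d by lia.
  by rewrite ek Gfdd; field; rewrite -ek.
case: (ltngtP n k) => [hnk|hkn|enk].
- rewrite vf0 ?ltn_eqF //.
  rewrite (@big_cat_nat _ _ _ n 0 k) //; last exact: ltnW.
  rewrite big_nat_cond big1 ?add0r; last first.
    by move=> j /andP[/andP[_ hj] _]; rewrite Gf0 ?mulr0.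
  rewrite big_ltn // Gfkk //.
  rewrite (eq_big_nat _ _ (F2 := fun j => - (y n / x n) * (y k * y j / (x j ^+ 2 * Kc x y j.+1) * (y j / Kc x y j)))); last first.
    by move=> j /andP[hj _]; rewrite GfL //; ring.
  rewrite -big_distrr /= (tele _ hx) //.
  have hxn := hx n hnd.
  have Kn : Kc x y n.+1 != 0 by rewrite gt_eqF // Kc_gt0.
  by rewrite GfL //; field; rewrite hxn Kk Kn.
- rewrite vf0 ?gtn_eqF // big_nat_cond big1 ?Gf0 ?subr0 //.
  by move=> j /andP[/andP[_ hj] _]; rewrite Gf0 ?mulr0 //; lia.
- rewrite enk vfkk -?enk // big_nat_cond big1 ?subr0 ?Gfkk -?enk //.
  by move=> j /andP[/andP[_ hj] _]; rewrite Gf0 ?mulr0 //; lia.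
Qed.

Lemma x_neq0 (R : fieldType) d (x y : nat -> R) :
  Bmat d x y \in unitmx -> forall i, (i < d)%N -> x i != 0.
Proof.
move=> hB i hi; apply/negP => /eqP hx0; move: hB.
rewrite unitmxE (expand_det_row _ (inord i)) big1 ?unitr0 // => j _.
rewrite !mxE.
have e : nat_of_ord (@inord d i) = i by rewrite inordK // ltnW.
rewrite -[inord i == j]/(nat_of_ord (@inord d i) == nat_of_ord j) e.
have -> : (i == d) = false by rewrite ltn_eqF.
case: ifP => _; last by rewrite mul0r.
by case: eqP => [<-|_]; rewrite ?hx0 mul0r.
Qed.

Theorem lemma4 (R : realFieldType) (d : nat) (x y : nat -> R)
  (hd : (0 < d)%N) (hB : Bmat d x y \in unitmx) :
  let v := Bcol d x y in
  let K := Kc x y in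
  (forall (k : nat) (i : 'I_d.+1), (k < d)%N ->
     gs v k i 0 =
       (if (i < k)%N then - (y k / K k) * (y i / x i)
        else if i == k :> nat then x k
        else if (i < d)%N then 0
        else y k / K k))
  /\ (forall i : 'I_d.+1,
       gs v d i 0 = (if (i < d)%N then - (y d / K d) * (y i / x i)
                     else y d / K d))
  /\ (forall k : nat, (k < d)%N ->
       dot (gs v k) (gs v k) = x k ^+ 2 * K k.+1 / K k)
  /\ dot (gs v d) (gs v d) = y d ^+ 2 / K d
  /\ (forall j k : nat, (j < k)%N -> (k <= d)%N ->
       gs_mu v k j = y k * y j / (x j ^+ 2 * K j.+1)).
Proof.
move=> v K; rewrite {}/v {}/K.
have hx := x_neq0 hB.
have G := @gsG R d x y hx.
split; [|split; [|split; [|split]]].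
- by move=> k i hk; rewrite G // ?/Gf ?hk //; apply: ltnW.
- move=> i; rewrite G // /Gf ltnn; case: ifP => // ->; by case: (_ == _).
- move=> k hk; rewrite (@dot_nat _ _ _ _ (Gf d x y k) (Gf d x y k)); last first.
  + by move=> i; apply: G; lia.
  + by move=> i; apply: G; lia.
  rewrite (normG _ hx) ?hk; last by lia.
  have hxk := hx k hk.
  have K0 : Kc x y k != 0 by rewrite gt_eqF // Kc_gt0.
  by rewrite Kc_S; field; rewrite K0 hxk.
- rewrite (@dot_nat _ _ _ _ (Gf d x y d) (Gf d x y d)); last first.
  + by move=> i; apply: G.
  + by move=> i; apply: G.
  by rewrite (normG _ hx) // ltnn.
- move=> j k hjk hk; have hjd : (j < d)%N by lia.
  rewrite /gs_mu (@dot_nat _ _ _ _ (vf d x y k) (Gf d x y j)); last first.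
  + by move=> i; apply: G; lia.
  + by move=> i; apply: BcolE.
  rewrite (@dot_nat _ _ _ _ (Gf d x y j) (Gf d x y j)); last first.
  + by move=> i; apply: G; lia.
  + by move=> i; apply: G; lia.
  rewrite dotvG // (normG _ hx) ?hjd; last by lia.
  have hxj := hx j hjd.
  have K0 : Kc x y j != 0 by rewrite gt_eqF // Kc_gt0.
  have K1 : Kc x y j + (y j / x j) ^+ 2 != 0 by rewrite -Kc_S gt_eqF // Kc_gt0.
  have K2 : Kc x y j * x j ^+ 2 + y j ^+ 2 != 0.
    have -> : Kc x y j * x j ^+ 2 + y j ^+ 2 = x j ^+ 2 * (Kc x y j + (y j / x j) ^+ 2) by field.
    by rewrite mulf_neq0 // expf_neq0.
  by rewrite Kc_S; field; rewrite ?K0 ?hxj ?K1 ?K2.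
Qed.
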